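(* Let $q,z,m$ be positive integers with $q\geq 2$ and $z<q$, and put $L=\lfloor\frac{q-1}{q-z}\rfloor$. Index rows by $\mathbf{a}=(a_0,\ldots,a_{m-1})\in\mathbb{Z}_q^m$. Define the $q^m\times mLq$ array $\mathbf{P}=(p_{\mathbf{a},(b,\delta,\varepsilon)})$ with columns $(b,\delta,\varepsilon)$, $b\in\mathbb{Z}_q$, $0\leq\delta<m$, $\varepsilon\in\{0,\ldots,L-1\}$, by: $p_{\mathbf{a},(b,\delta,\varepsilon)}=*$ if $a_\delta\in\{b,b-1,\ldots,b-(z-1)\}$, and otherwise $p_{\mathbf{a},(b,\delta,\varepsilon)}=(a_0,\ldots,a_{\delta-1},\,b-\varepsilon(q-z),\,a_{\delta+1},\ldots,a_{m-1},\,a_\delta-b-1)$. Define the $q^m\times q$ array $\mathbf{C}=(c_{\mathbf{a},(b,m)})$ with columns $(b,m)$, $b\in\mathbb{Z}_q$, by: $c_{\mathbf{a},(b,m)}=*$ if $\sum_{l=0}^{m-1}a_l\in\{b,b+1,\ldots,b+(z-1)\}$, and otherwise $c_{\mathbf{a},(b,m)}=(a_0,\ldots,a_{m-1},\,b-\sum_{l=0}^{m-1}a_l-1)$. All arithmetic is modulo $q$. Then $(\mathbf{P},\mathbf{C})$ (the columns of $\mathbf{P}$ followed by those of $\mathbf{C}$) is an $\big((mL+1)q,\ q^m,\ zq^{m-1},\ (q-z)q^m\big)$ placement delivery array. In particular the associated coded caching scheme has $\frac{M}{N}=\frac{z}{q}$ and rate $R=q-z$.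
   Context: A $(K,F,Z,S)$ placement delivery array (PDA) is an $F\times K$ array whose entries are either a special symbol $*$ or one of $S$ distinct non-star symbols (identified with $1,\ldots,S$), such that: (C1) $*$ appears exactly $Z$ times in each column; (C2) each of the $S$ symbols occurs at least once; (C3) for any two distinct entries $p_{j_1,k_1}=p_{j_2,k_2}=s$ with $s$ a non-star symbol, we have $j_1\neq j_2$, $k_1\neq k_2$, and $p_{j_1,k_2}=p_{j_2,k_1}=*$. A $(K,F,Z,S)$ PDA yields an $F$-division coded caching scheme for $K$ users with memory ratio $M/N=Z/F$ and rate $R=S/F$. The non-star symbols here are vectors in $\mathbb{Z}_q^{m+1}$. *)

(* Defs.v *)
From HB Require Import structures.
From mathcomp Require Import all_boot all_order all_algebra.
Set Implicit Arguments. Unset Strict Implicit. Unset Printing Implicit Defensive.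
Import GRing.Theory.

(* A (K,F,Z,S) placement delivery array: an F x K array with rows indexed by
   the finite type Row (#|Row| = F), columns indexed by Col (#|Col| = K),
   entries in option Sym where None stands for the star symbol "*". *)
Definition is_PDA (Row Col Sym : finType) (A : Row -> Col -> option Sym)
  (K F Z S : nat) : Prop :=
  [/\ #|Col| = K,
      #|Row| = F,
      (forall c : Col, #|[set r : Row | A r c == None]| = Z),
      #|[set s : Sym | [exists r : Row, exists c : Col, A r c == Some s]]| = S
    &
      (forall (r1 r2 : Row) (c1 c2 : Col) (s : Sym),
         (r1, c1) <> (r2, c2) -> A r1 c1 = Some s -> A r2 c2 = Some s ->
         [/\ r1 <> r2, c1 <> c2, A r1 c2 = None & A r2 c1 = None])].

Local Open Scope ring_scope.

(* Rows: a in Z_q^m.  Symbols: vectors in Z_q^(m+1), written as a pair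
   (first m coordinates, last coordinate). *)
Definition pda_row (q m : nat) := {ffun 'I_m -> 'Z_q}.
Definition pda_sym (q m : nat) := ({ffun 'I_m -> 'Z_q} * 'Z_q)%type.

Definition pda_L (q z : nat) : nat := ((q - 1) %/ (q - z))%N.

(* Columns: inl (b, delta, eps) for the array P, inr b for the array C. *)
Definition pda_col (q z m : nat) :=
  (('Z_q * 'I_m * 'I_(pda_L q z)) + 'Z_q)%type.

Definition arrP (q z m : nat) (a : pda_row q m) (b : 'Z_q) (d : 'I_m)
    (e : 'I_(pda_L q z)) : option (pda_sym q m) :=
  if [exists i : 'I_z, a d == b - (i : nat)%:R] then None
  else Some ([ffun j => if j == d then b - ((e : nat) * (q - z))%:R else a j],
             a d - b - 1).

Definition arrC (q z m : nat) (a : pda_row q m) (b : 'Z_q)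
    : option (pda_sym q m) :=
  let s := \sum_(l < m) a l in
  if [exists i : 'I_z, s == b + (i : nat)%:R] then None
  else Some (a, b - s - 1).

Definition arrPC (q z m : nat) (a : pda_row q m) (c : pda_col q z m)
    : option (pda_sym q m) :=
  match c with
  | inl (b, d, e) => arrP a b d e
  | inr b => arrC z a b
  end.

(* Main.v *)
Require Import Defs.
From mathcomp Require Import all_boot all_order all_algebra.
From mathcomp Require Import ring zify.
Set Implicit Arguments. Unset Strict Implicit. Unset Printing Implicit Defensive.
Import GRing.Theory.
Local Open Scope ring_scope.

Section Zp.
Variable p : nat.
Local Notation N := p.+2.

Lemma valD (x y : 'Z_N) : nat_of_ord (x + y) =
  if (x + y < N)%N then (x + y)%N else (x + y - N)%N.
Proof.
case: x y => [x hx] [y hy].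
rewrite /= /GRing.add /= -[(Zp_trunc _).+2]/N in hx hy *.
case: ifP => h; first by rewrite modn_small.
move/negbT: h; rewrite -leqNgt => h.
rewrite -{1}(subnK h) modnDr modn_small //; lia.
Qed.

Lemma valN (x : 'Z_N) : nat_of_ord (- x) = if (x : nat) == 0%N then 0%N else (N - x)%N.
Proof.
case: x => [x hx].
rewrite /= /GRing.opp /= -[(Zp_trunc _).+2]/N in hx *.
case: ifP => /eqP h; first by rewrite h modnn.
by rewrite modn_small; lia.
Qed.

Lemma valD_cases (x y : 'Z_N) :
  (nat_of_ord ((x + y)%R : 'Z_N) = x + y /\ x + y < N)%N \/ (nat_of_ord ((x + y)%R : 'Z_N) = x + y - N /\ N <= x + y)%N.
Proof. by rewrite valD; case: ltnP; [left|right]. Qed.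

Lemma valN_cases (x : 'Z_N) :
  (nat_of_ord ((- x)%R : 'Z_N) = 0 /\ nat_of_ord x = 0)%N \/ (nat_of_ord ((- x)%R : 'Z_N) = N - x /\ 0 < x)%N.
Proof. by rewrite valN; case: eqP => h; [left|right; split => //; rewrite lt0n; apply/eqP]. Qed.

Lemma valn n : (n < N)%N -> nat_of_ord (n%:R : 'Z_N) = n.
Proof. by move=> h; rewrite val_Zp_nat // modn_small. Qed.

Lemma Zp_val_inj (x y : 'Z_N) : val x = val y -> x = y.
Proof. exact: val_inj. Qed.

Lemma star_eq (z : nat) (x : 'Z_N) : (z <= N)%N ->
  [exists i : 'I_z, x == (i : nat)%:R] = (x < z)%N.
Proof.
move=> hz; apply/existsP/idP => [[i /eqP ->]|h].
  by rewrite valn ?ltn_ord //; have := ltn_ord i; lia.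
exists (Ordinal h); apply/eqP/val_inj; rewrite /= valn //; lia.
Qed.

Lemma card_lt (z : nat) : (z <= N)%N -> #|[set y : 'Z_N | (y < z)%N]| = z.
Proof.
move=> hz.
have -> : [set y : 'Z_N | (y < z)%N] = [set widen_ord hz x | x : 'I_z].
  apply/setP => y; rewrite !inE; apply/idP/imsetP => [h|[x _ ->]].
    by exists (Ordinal h) => //; apply/val_inj.
  exact: (ltn_ord x).
rewrite card_imset ?card_ord //; by move=> u v /(congr1 val) /= /val_inj.
Qed.

End Zp.

Lemma card_coord (T : finType) (m : nat) (j0 : 'I_m) (S : {set T}) :
  #|[set a : {ffun 'I_m -> T} | a j0 \in S]| = (#|S| * #|T| ^ (m - 1))%N.
Proof.
pose F : 'I_m -> pred T := fun j => if j == j0 then (fun x => x \in S) else predT.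
have -> : [set a : {ffun 'I_m -> T} | a j0 \in S] = [set a in family F].
  apply/setP => a; rewrite !inE; apply/idP/familyP => [h j|h].
    by rewrite /F; case: eqP => [->|].
  by have := h j0; rewrite /F eqxx.
rewrite cardsE card_family.
rewrite foldrE big_map big_enum /= (bigD1 j0) //= {1}/F eqxx.
rewrite (eq_bigr (fun _ => #|T|)); last by move=> j /negbTE hj; rewrite /F hj; apply: eq_card => x.
by rewrite prod_nat_const cardC1 card_ord subn1.
Qed.


Lemma card_sumcoord (p m : nat) (j0 : 'I_m) (S : {set 'Z_p.+2}) :
  #|[set a : {ffun 'I_m -> 'Z_p.+2} | \sum_(l < m) a l \in S]| = (#|S| * p.+2 ^ (m - 1))%N.
Proof.
pose f (a : {ffun 'I_m -> 'Z_p.+2}) : {ffun 'I_m -> 'Z_p.+2} :=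
  [ffun j => if j == j0 then \sum_(l < m) a l else a j].
have finj : injective f.
  move=> a b /ffunP eq; apply/ffunP => j.
  have oth k : k != j0 -> a k = b k.
    by move=> hk; have := eq k; rewrite !ffunE (negbTE hk).
  case: (eqVneq j j0) => [->|/oth //].
  have := eq j0; rewrite !ffunE eqxx (bigD1 j0) //= [X in _ = X](bigD1 j0) //=.
  rewrite (eq_bigr (fun k => b k)); last by move=> k /oth.
  by move/addIr.
have -> : [set a : {ffun 'I_m -> 'Z_p.+2} | \sum_(l < m) a l \in S] =
          f @^-1: [set a : {ffun 'I_m -> 'Z_p.+2} | a j0 \in S].
  by apply/setP => a; rewrite !inE ffunE eqxx.
rewrite card_preimset // card_coord card_ord.
by [].
Qed.

Section Main.
Variables p z m : nat.
Local Notation N := p.+2.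
Hypotheses (hz0 : (0 < z)%N) (hzN : (z < N)%N) (hm : (0 < m)%N).

Lemma ed_lt (e : 'I_(pda_L N z)) : ((e : nat) * (N - z) < z)%N.
Proof.
have he := ltn_ord e.
have h1 : ((e : nat).+1 * (N - z) <= pda_L N z * (N - z))%N by rewrite leq_mul2r he orbT.
have h2 := leq_trunc_div (N - 1) (N - z).
rewrite /pda_L mulSn in h1.
move: h1 h2; move: ((N - 1) %/ (N - z) * (N - z))%N ((e : nat) * (N - z))%N => A B.
lia.
Qed.

Lemma e_mono (e1 e2 : nat) : (e1 < e2)%N -> (e1 * (N - z) + (N - z) <= e2 * (N - z))%N.
Proof. by move=> h; rewrite addnC -mulSn leq_mul2r h orbT. Qed.

Lemma eq_sub_nat (x y w : 'Z_N) : (x == y - w) = (y - x == w).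
Proof. by apply/eqP/eqP => h; [rewrite h; ring | rewrite -h; ring]. Qed.

Lemma eq_add_nat (x y w : 'Z_N) : (x == y + w) = (x - y == w).
Proof. by apply/eqP/eqP => h; [rewrite h; ring | rewrite -h; ring]. Qed.

Lemma arrPE (a : pda_row N m) b d (e : 'I_(pda_L N z)) :
  @arrP N z m a b d e = if (nat_of_ord ((b - a d)%R : 'Z_N) < z)%N then None
    else Some ([ffun j => if j == d then b - ((e : nat) * (N - z))%:R else a j],
               a d - b - 1).
Proof.
rewrite /arrP.
have -> : [exists i : 'I_z, a d == b - (i : nat)%:R] = [exists i : 'I_z, b - a d == (i : nat)%:R].
  by apply: eq_existsb => i; rewrite eq_sub_nat.
by rewrite star_eq //; apply: ltnW.
Qed.

Lemma arrCE (a : pda_row N m) b :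
  @arrC N z m a b = if (nat_of_ord ((\sum_(l < m) a l - b)%R : 'Z_N) < z)%N then None
    else Some (a, b - \sum_(l < m) a l - 1).
Proof.
rewrite /arrC.
have -> : [exists i : 'I_z, \sum_(l < m) a l == b + (i : nat)%:R] =
          [exists i : 'I_z, \sum_(l < m) a l - b == (i : nat)%:R].
  by apply: eq_existsb => i; rewrite eq_add_nat.
by rewrite star_eq //; apply: ltnW.
Qed.


Lemma valE (e : 'I_(pda_L N z)) :
  nat_of_ord (((e : nat) * (N - z))%:R : 'Z_N) = ((e : nat) * (N - z))%N.
Proof. by rewrite valn //; apply: ltn_trans (ed_lt e) hzN. Qed.

Lemma Some_pair_inj (A B : Type) (a c : A) (b d : B) :
  Some (a, b) = Some (c, d) -> a = c /\ b = d.
Proof. by case=> -> ->. Qed.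

Lemma arith (x y w : 'Z_N) : (z <= x)%N -> (y < z)%N -> (w < z)%N ->
  ((y + (N - z) <= w)%N \/ (w + (N - z) <= y)%N) -> (nat_of_ord ((x + (w - y))%R : 'Z_N) < z)%N.
Proof.
move=> hx hy hw hyw.
have hX : (x < N)%N := ltn_ord x. have hY : (y < N)%N := ltn_ord y.
have hW : (w < N)%N := ltn_ord w.
have c1 := valN_cases y. have c2 := valD_cases w (- y).
have c3 := valD_cases x (w - y).
move: hx hy hw hyw hX hY hW c1 c2 c3.
move: (nat_of_ord x) (nat_of_ord y) (nat_of_ord w) (nat_of_ord (- y)) (nat_of_ord (w - y)) (nat_of_ord (x + (w - y))) => *.
lia.
Qed.

Lemma core (r1 r2 : pda_row N m) (c1 c2 : pda_col N z m) s :
  (r1, c1) <> (r2, c2) -> arrPC r1 c1 = Some s -> arrPC r2 c2 = Some s ->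
  [/\ r1 <> r2, c1 <> c2 & arrPC r1 c2 = None].
Proof.
move=> neq.
case: c1 neq => [[[b1 d1] e1]|b1] neq; case: c2 neq => [[[b2 d2] e2]|b2] neq /=;
  rewrite ?arrPE ?arrCE.
-
  case: ifP => // h1 [<-]; case: ifP => // h2 H; have [/ffunP hv ht] := Some_pair_inj H.
  case: (eqVneq d1 d2) => [Ed|hd].
    subst d2.
    have hoth j : j != d1 -> r2 j = r1 j.
      by move=> hj; have := hv j; rewrite !ffunE (negbTE hj).
    have hb : b2 - ((e2 : nat) * (N - z))%:R = b1 - ((e1 : nat) * (N - z))%:R.
      by have := hv d1; rewrite !ffunE eqxx.
    have hne : e1 != e2.
      apply/eqP => Ee; subst e2.
      have Eb : b1 = b2.
        have -> : b1 = (b1 - ((e1 : nat) * (N - z))%:R) + ((e1 : nat) * (N - z))%:R by ring.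
        by rewrite -hb; ring.
      subst b2.
      have Er : r1 d1 = r2 d1.
        have -> : r1 d1 = (r1 d1 - b1 - 1) + b1 + 1 by ring.
        by rewrite -ht; ring.
      apply: neq; congr (_, _); apply/ffunP => j.
      by case: (eqVneq j d1) => [->|/hoth ->].
    have hD : ((e1 : nat) * (N - z))%N <> ((e2 : nat) * (N - z))%N.
      by move/eqP; rewrite eqn_pmul2r ?subn_gt0 // => /eqP/val_inj Ev; rewrite Ev eqxx in hne.
    split.
    - move=> E; subst r2.
      have Eb : b1 = b2.
        have -> : b1 = - (r1 d1 - b1 - 1) + r1 d1 - 1 by ring.
        by rewrite -ht; ring.
      subst b2; apply: hD.
      rewrite -(valE e1) -(valE e2); congr nat_of_ord.
      have -> : ((e1 : nat) * (N - z))%:R = b1 - (b1 - ((e1 : nat) * (N - z))%:R) :> 'Z_N by ring.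
      by rewrite -hb; ring.
    - by case=> _ Ee; move: hne; rewrite Ee eqxx.
    - have hb2 : b2 = b1 - ((e1 : nat) * (N - z))%:R + ((e2 : nat) * (N - z))%:R.
        by rewrite -hb; ring.
      rewrite (_ : b2 - r1 d1 = (b1 - r1 d1) + (((e2 : nat) * (N - z))%:R - ((e1 : nat) * (N - z))%:R)); last by rewrite hb2; ring.
      rewrite arith //; first by rewrite leqNgt h1.
      + by rewrite valE; apply: ed_lt.
      + by rewrite valE; apply: ed_lt.
      + rewrite !valE; case: (ltngtP e1 e2) => [/e_mono|/e_mono|/val_inj Ee]; [by left|by right|].
        by move: hne; rewrite Ee eqxx.
  have hr2 : r2 d1 = b1 - ((e1 : nat) * (N - z))%:R.
    by have := hv d1; rewrite !ffunE eqxx (negbTE hd).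
  have hr1 : r1 d2 = b2 - ((e2 : nat) * (N - z))%:R.
    by have := hv d2; rewrite !ffunE eqxx eq_sym (negbTE hd).
  split.
  - move=> E; subst r2; move: h1.
    by rewrite hr2 (_ : b1 - (b1 - _) = ((e1 : nat) * (N - z))%:R) ?valE ?ed_lt //; ring.
  - by case=> _ Ed _; rewrite Ed eqxx in hd.
  - by rewrite hr1 (_ : b2 - (b2 - _) = ((e2 : nat) * (N - z))%:R) ?valE ?ed_lt //; ring.
-
  case: ifP => // h1 [<-]; case: ifP => // h2 H; have [hv ht] := Some_pair_inj H.
  have hr2 : r2 d1 = b1 - ((e1 : nat) * (N - z))%:R by rewrite hv ffunE eqxx.
  split => //.
  - move=> E; move: h1; rewrite E.
    by rewrite hr2 (_ : b1 - (b1 - _) = ((e1 : nat) * (N - z))%:R) ?valE ?ed_lt //; ring.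
  have hs : \sum_(l < m) r2 l = r2 d1 + \sum_(l < m | l != d1) r1 l.
    rewrite (bigD1 d1) //=; congr (_ + _); apply: eq_bigr => j /negbTE hj.
    by rewrite hv ffunE hj.
  have hs1 : \sum_(l < m) r1 l = r1 d1 + \sum_(l < m | l != d1) r1 l by rewrite (bigD1 d1).
  have hb2 : b2 = (r1 d1 - b1 - 1) + \sum_(l < m) r2 l + 1 by rewrite -ht; ring.
  have -> : \sum_(l < m) r1 l - b2 = ((e1 : nat) * (N - z))%:R.
    by rewrite hb2 hs hs1 hr2; ring.
  by rewrite valE ed_lt.
-
  case: ifP => // h1 [<-]; case: ifP => // h2 H; have [hv ht] := Some_pair_inj H.
  have hr1 : r1 d2 = b2 - ((e2 : nat) * (N - z))%:R by rewrite -hv ffunE eqxx.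
  have hD : b2 - r1 d2 = ((e2 : nat) * (N - z))%:R by rewrite hr1; ring.
  split => //.
  - by move=> E; move: h2; rewrite -E hD valE ed_lt.
  - by rewrite hD valE ed_lt.
-
  case: ifP => // h1 [<-]; case: ifP => // h2 H; have [hv ht] := Some_pair_inj H.
  exfalso; apply: neq; subst r2; congr (_, inr _).
  have -> : b1 = (b1 - \sum_(l < m) r1 l - 1) + \sum_(l < m) r1 l + 1 by ring.
  by rewrite -ht; ring.
Qed.
End Main.

Theorem theorem5 (q z m : nat) :
  (2 <= q)%N -> (0 < z)%N -> (z < q)%N -> (0 < m)%N ->
  is_PDA (@arrPC q z m)
    ((m * pda_L q z + 1) * q) (q ^ m) (z * q ^ (m - 1)) ((q - z) * q ^ m).
Proof.
case: q => [|[|p]] // _ hz0 hzN hm.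
have hzle : (z <= p.+2)%N by apply: ltnW.
split.
- rewrite /pda_col card_sum !card_prod !card_ord.
  rewrite -[(Zp_trunc _).+2]/(p.+2); move: (pda_L p.+2 z) => L; nia.
- by rewrite card_ffun !card_ord.
- case=> [[[b d] e]|b].
  + have -> : [set r : pda_row p.+2 m | arrPC r (inl (b, d, e)) == None] =
              [set r : pda_row p.+2 m | r d \in (fun x : 'Z_p.+2 => b - x) @^-1: [set y : 'Z_p.+2 | (nat_of_ord y < z)%N]].
      by apply/setP => r; rewrite !inE /= arrPE //; case: ifP.
    rewrite card_coord card_preimset ?card_lt ?card_ord //.
    by move=> x y /addrI/oppr_inj.
  + have -> : [set r : pda_row p.+2 m | @arrPC p.+2 z m r (inr b) == None] =
              [set r : pda_row p.+2 m | \sum_(l < m) r l \in (fun x : 'Z_p.+2 => x - b) @^-1: [set y : 'Z_p.+2 | (nat_of_ord y < z)%N]].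
      by apply/setP => r; rewrite !inE /= arrCE //; case: ifP.
    rewrite (card_sumcoord (Ordinal hm)) card_preimset ?card_lt //.
    by move=> x y /addIr.
- have -> : [set s : pda_sym p.+2 m | [exists r : pda_row p.+2 m, exists c : pda_col p.+2 z m, @arrPC p.+2 z m r c == Some s]] =
            setX [set: pda_row p.+2 m] (~: ((fun t : 'Z_p.+2 => - t - 1) @^-1: [set y : 'Z_p.+2 | (nat_of_ord y < z)%N])).
    apply/setP => [[v t]]; rewrite !inE; set w := (- t - 1 : 'Z_p.+2).
    apply/existsP/idP.
    + case=> r /existsP [[[[b d] e]|b] /=]; rewrite ?arrPE ?arrCE //; case: ifP => // h /eqP [_ ht]; rewrite /w -ht.
      * change (~~ (nat_of_ord ((- (r d - b - 1) - 1)%R : 'Z_p.+2) < z)%N).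
        by rewrite (_ : - (r d - b - 1) - 1 = b - r d) ?h //; ring.
      * change (~~ (nat_of_ord ((- (b - \sum_(l < m) r l - 1) - 1)%R : 'Z_p.+2) < z)%N).
        by rewrite (_ : - (b - \sum_(l < m) r l - 1) - 1 = \sum_(l < m) r l - b) ?h //; ring.
    + move=> h; exists v; apply/existsP; exists (inr (t + \sum_(l < m) v l + 1)).
      rewrite /= arrCE //.
      rewrite (_ : \sum_(l < m) v l - (t + \sum_(l < m) v l + 1) = - t - 1); last by ring.
      rewrite (negbTE h); apply/eqP; congr (Some (_, _)); ring.
  rewrite cardsX cardsT card_ffun !card_ord.
  have := cardsC ((fun t : 'Z_p.+2 => - t - 1) @^-1: [set y : 'Z_p.+2 | (nat_of_ord y < z)%N]).
  rewrite card_preimset ?card_lt ?card_ord //; last by move=> x y /addIr/oppr_inj.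
  rewrite -[(Zp_trunc _).+2]/(p.+2) => E.
  rewrite mulnC; congr (_ * _)%N; lia.
- move=> r1 r2 c1 c2 s neq H1 H2.
  have [n12 c12 N12] := core hz0 hzN hm neq H1 H2.
  have [_ _ N21] := core hz0 hzN hm (fun E => neq (esym E)) H2 H1.
  by split.
Qed.
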